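(* Let $n\to\infty$, and let $N=N(n)\ge 3n$ and $p=p(n)$ be such that \[\beta=\frac{\frac{1}{np}\log\frac Nn}{\log\left(\frac{1}{np}\log\frac Nn\right)}>1,\] and let $m=8\beta n^2p$. Then asymptotically almost surely, for every two disjoint sets $S,T\subseteq[N]$ with $|S|=|T|=n$, the number of edges of $G\sim G(N,p)$ contained in $S\cup T$ and having at least one endpoint in $S$ is at most $m$.
   Context: $G(N,p)$ denotes the Erdős–Rényi random graph on vertex set $[N]$ in which each pair is an edge independently with probability $p$. All logarithms are natural. ''Asymptotically almost surely'' means with probability tending to $1$ as $n\to\infty$. *)

(* Defs.v *)
From HB Require Import structures.
From mathcomp Require Import all_boot all_order all_algebra.
From mathcomp Require Import reals exp topology normedtype sequences.
Unset Printing Implicit Defensive.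
Import Order.TTheory GRing.Theory Num.Theory.
Local Open Scope ring_scope.

(* Vertex set [N] is 'I_N; an (undirected simple) graph on [N] is its edge set,
   a set of 2-element subsets of 'I_N. *)
Definition pairs (N : nat) : {set {set 'I_N}} := [set e : {set 'I_N} | #|e| == 2%N].

(* Probability that G(N,p) satisfies the event A: each of the C(N,2) pairs is an
   edge independently with probability p. *)
Definition gnp_prob {R : realType} (N : nat) (p : R)
    (A : pred {set {set 'I_N}}) : R :=
  \sum_(E : {set {set 'I_N}} | (E \subset pairs N) && A E)
     p ^+ #|E| * (1 - p) ^+ (#|pairs N| - #|E|).

Definition edges_touching (N : nat) (E : {set {set 'I_N}}) (S T : {set 'I_N})
  : {set {set 'I_N}} :=
  [set e in E | (e \subset S :|: T) && (e :&: S != set0)].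

Definition good_event {R : realType} (N n : nat) (m : R) : pred {set {set 'I_N}} :=
  fun E => [forall S : {set 'I_N}, forall T : {set 'I_N},
     ([disjoint S & T] && (#|S| == n) && (#|T| == n)) ==>
       ((#|edges_touching N E S T|)%:R <= m)].

Definition beta_par {R : realType} (N n : nat) (p : R) : R :=
  let x := (n%:R * p)^-1 * ln (N%:R / n%:R) in x / ln x.

(* Main.v *)
Require Import Defs.
From HB Require Import structures.
From mathcomp Require Import all_boot all_order all_algebra.
From mathcomp Require Import reals exp topology normedtype sequences.
Import Order.TTheory GRing.Theory Num.Theory numFieldNormedType.Exports.
Local Open Scope classical_set_scope.
Local Open Scope ring_scope.
From mathcomp Require Import zify ring lra.
Section Comb.
Variable R : realType.

Lemma sum_subsets (T : finType) (A : {set T}) (a b : R) :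
  \sum_(E : {set T} | E \subset A) a ^+ #|E| * b ^+ (#|A| - #|E|) = (a + b) ^+ #|A|.
Proof.
rewrite addrC exprDn.
rewrite (partition_big (fun E : {set T} => (inord #|E| : 'I_(#|A|.+1))) predT) //=.
apply: eq_bigr => j _.
rewrite (eq_bigl (fun E => E \in [set E : {set T} | E \subset A & #|E| == j])); last first.
  move=> E; rewrite inE; apply/andP/andP => [[EA /eqP <-]|[EA /eqP Ej]]; split => //.
    by rewrite inordK // ltnS subset_leq_card.
  by apply/eqP/val_inj; rewrite /= Ej inordK.
rewrite (eq_bigr (fun _ => b ^+ (#|A| - j) * a ^+ j)); last first.
  by move=> E; rewrite inE => /andP[_ /eqP ->]; rewrite mulrC.
by rewrite sumr_const cards_draws.
Qed.

Lemma sum_supsets (T : finType) (A K : {set T}) (a b : R) : K \subset A ->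
  \sum_(E : {set T} | (E \subset A) && (K \subset E)) a ^+ #|E| * b ^+ (#|A| - #|E|)
   = a ^+ #|K| * (a + b) ^+ #|A :\: K|.
Proof.
move=> KA.
rewrite (reindex_onto (fun E' => K :|: E') (fun E => E :\: K)) /=; last first.
  move=> E /andP[_ KE]; apply/setP=> x; rewrite !inE.
  by case: (boolP (x \in K)) => //= xK; rewrite (subsetP KE).
rewrite -sum_subsets mulr_sumr.
have H1 E' : (K :|: E' \subset A) && (K \subset K :|: E') && ((K :|: E') :\: K == E') = (E' \subset A :\: K).
  apply/idP/idP => [/andP[/andP[KEA _] /eqP EE]|E'AK].
    by rewrite -EE; apply: setSD.
  move: E'AK; rewrite subsetD => /andP[E'A dE'K].
  rewrite subUset KA E'A subsetUl /=.
  by rewrite setDUl setDv set0U; apply/eqP; apply/setDidPl.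
apply: eq_big => E'; first exact: H1.
rewrite H1.
move=> /[dup] E'AK; rewrite subsetD => /andP[E'A dE'K].
have cU : #|K :|: E'| = (#|K| + #|E'|)%N.
  by rewrite cardsU setIC (disjoint_setI0 dE'K) cards0 subn0.
have cD : #|A :\: K| = (#|A| - #|K|)%N.
  by rewrite cardsD (setIidPr KA).
rewrite cU cD exprD -mulrA; congr (_ * (_ * _)); congr (_ ^+ _).
by rewrite subnDA.
Qed.
End Comb.

Section Gnp.
Variables (R : realType) (N : nat) (p : R).
Hypothesis hp : 0 <= p <= 1.
Let w (E : {set {set 'I_N}}) := p ^+ #|E| * (1 - p) ^+ (#|pairs N| - #|E|).

Lemma w_ge0 E : 0 <= w E.
Proof. by case/andP: hp => h0 h1; rewrite /w mulr_ge0 // exprn_ge0 // subr_ge0. Qed.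

Lemma gnp_compl (A : pred {set {set 'I_N}}) :
  gnp_prob N p A = 1 - gnp_prob N p (predC A).
Proof.
have tot : \sum_(E : {set {set 'I_N}} | E \subset pairs N) w E = 1.
  by rewrite /w sum_subsets subrKC expr1n.
rewrite -tot /gnp_prob [X in _ = X - _](bigID A) /= addrK.
by [].
Qed.

Lemma gnp_supset (K : {set {set 'I_N}}) : K \subset pairs N ->
  \sum_(E : {set {set 'I_N}} | (E \subset pairs N) && (K \subset E)) w E = p ^+ #|K|.
Proof.
move=> KP; rewrite /w sum_supsets // subrKC expr1n mulr1 //.
Qed.

Lemma gnp_tail (F : {set {set 'I_N}}) k : F \subset pairs N ->
  \sum_(E : {set {set 'I_N}} | (E \subset pairs N) && (k <= #|E :&: F|)%N) w E <= 'C(#|F|, k)%:R * p ^+ k.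
Proof.
move=> FP.
apply: (@le_trans _ _ (\sum_(E : {set {set 'I_N}} | E \subset pairs N) 'C(#|E :&: F|, k)%:R * w E)).
  rewrite [X in _ <= X](bigID (fun E => (k <= #|E :&: F|)%N)) /=.
  rewrite -[X in X <= _]addr0; apply: lerD; last first.
    by apply: sumr_ge0 => E _; rewrite mulr_ge0 // w_ge0.
  apply: ler_sum => E /andP[_ kE]; rewrite ler_peMl ?w_ge0 //.
  by rewrite ler1n bin_gt0.
have step E : 'C(#|E :&: F|, k)%:R * w E =
   \sum_(K : {set {set 'I_N}} | (K \subset F) && (#|K| == k) && (K \subset E)) w E.
  rewrite -cards_draws mulr_natl -sumr_const; apply: eq_bigl => K.
  by rewrite inE subsetI; case: (K \subset E); rewrite ?andbT ?andbF.
rewrite (eq_bigr _ (fun E _ => step E)).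
rewrite (exchange_big_dep (fun K : {set {set 'I_N}} => (K \subset F) && (#|K| == k))) /=; last first.
  by move=> E K _ /andP[].
rewrite (eq_bigr (fun _ => p ^+ k)); last first.
  move=> K /andP[KF /eqP Kk]; rewrite -Kk -(gnp_supset K (subset_trans KF FP)).
  by apply: eq_bigl => E; rewrite KF Kk eqxx.
rewrite (eq_bigl (fun K => K \in [set K : {set {set 'I_N}} | K \subset F & #|K| == k])); last first.
  by move=> K; rewrite inE.
by rewrite sumr_const cards_draws mulr_natl.
Qed.

Lemma le_sum1 (I : finType) (f : I -> R) i : (forall j, 0 <= f j) -> f i <= \sum_j f j.
Proof. by move=> f0; rewrite (bigD1 i) //= lerDl sumr_ge0. Qed.

Lemma edges_touchingE (E : {set {set 'I_N}}) (S T : {set 'I_N}) : E \subset pairs N ->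
  edges_touching N E S T = E :&: edges_touching N (pairs N) S T.
Proof.
move=> EP; apply/setP => e; rewrite !inE.
case eE: (e \in E) => //=; by have := subsetP EP e eE; rewrite inE => ->.
Qed.

Lemma edges_touching_sub (S T : {set 'I_N}) : edges_touching N (pairs N) S T \subset pairs N.
Proof. by apply/subsetP => e; rewrite inE => /andP[]. Qed.

Lemma card_edges_touching n (S T : {set 'I_N}) : #|S| = n -> #|T| = n ->
  (#|edges_touching N (pairs N) S T| <= 2 * n * n)%N.
Proof.
move=> Sn Tn.
have sub : edges_touching N (pairs N) S T \subset [set e : {set 'I_N} | e \subset S :|: T & #|e| == 2%N].
  by apply/subsetP => e; rewrite !inE => /andP[/eqP -> /andP[-> _]].
apply: (leq_trans (subset_leq_card sub)); rewrite cards_draws.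
have cU : (#|S :|: T| <= n + n)%N by rewrite cardsU Sn Tn leq_subr.
have := bin_ffact #|S :|: T| 2; rewrite /= ffactnS ffactn1.
move=> h.
have h' : ('C(#|S :|: T|, 2) * 2 = #|S :|: T| * #|S :|: T|.-1)%N := h.
have := leq_mul cU (leq_trans (leq_pred _) cU).
rewrite -h'; move: ('C(_, _)) => c.
rewrite (_ : ((n + n) * (n + n) = 4 * (n * n))%N); last by rewrite mulnDl !mulnDr; lia.
rewrite -mulnA; move: (n * n)%N => q; lia.
Qed.

Lemma gnp_bad (n : nat) (m : R) : 0 <= m ->
  gnp_prob N p (predC (good_event N n m)) <=
  ('C(N, n) * 'C(N, n))%:R * ('C(2 * n * n, (Num.truncn m).+1)%:R * p ^+ (Num.truncn m).+1).
Proof.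
move=> m0; set k := (Num.truncn m).+1.
set B := 'C(2 * n * n, k)%:R * p ^+ k.
have B0 : 0 <= B by case/andP: hp => p0 _; rewrite mulr_ge0 // exprn_ge0.
pose valid (S T : {set 'I_N}) := [&& [disjoint S & T], #|S| == n & #|T| == n].
pose G E S T := if valid S T && (k <= #|E :&: edges_touching N (pairs N) S T|)%N then w E else 0.
have G0 E S T : 0 <= G E S T by rewrite /G; case: ifP => _ //; exact: w_ge0.
apply: (@le_trans _ _ (\sum_(E : {set {set 'I_N}} | E \subset pairs N) \sum_S \sum_T G E S T)).
  rewrite /gnp_prob [X in _ <= X](bigID (fun E => ~~ good_event N n m E)) /=.
  rewrite -[X in X <= _]addr0; apply: lerD; last first.
    by apply: sumr_ge0 => E _; apply: sumr_ge0 => S _; apply: sumr_ge0.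
  apply: ler_sum => E /andP[EP bad].
  move: bad; rewrite /good_event => /forallPn[S /forallPn[T]].
  rewrite negb_imply => /andP[vST cnt].
  have h1 := le_sum1 _ (fun S' => \sum_T' G E S' T') S (fun S' => sumr_ge0 _ (fun T' _ => G0 E S' T')).
  have h2 := le_sum1 _ (fun T' => G E S T') T (G0 E S).
  apply: le_trans (le_trans h2 h1).
  move: vST; rewrite -andbA => vST; rewrite /G /valid vST /= ifT //.
  rewrite -edges_touchingE // /k truncn_lt_nat //.
  by rewrite ltNge.
rewrite exchange_big /=.
under eq_bigr => S _ do rewrite exchange_big /=.
apply: (@le_trans _ _ (\sum_(S : {set 'I_N}) \sum_(T : {set 'I_N}) if valid S T then B else 0)).
  apply: ler_sum => S _; apply: ler_sum => T _.
  rewrite /G; case: (boolP (valid S T)) => vST /=; last by rewrite big1.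
  rewrite -big_mkcondr /=.
  apply: (le_trans (gnp_tail _ _ (edges_touching_sub S T))).
  rewrite ler_wpM2r //; first by case/andP: hp => p0 _; exact: exprn_ge0.
  rewrite ler_nat; apply: leq_bin2l.
  by case/and3P: vST => _ /eqP Sn /eqP Tn; apply: card_edges_touching.
apply: (@le_trans _ _ (\sum_(S : {set 'I_N} | #|S| == n) \sum_(T : {set 'I_N} | #|T| == n) B)).
  rewrite [X in _ <= X]big_mkcond; apply: ler_sum => S _ /=.
  case: (boolP (#|S| == n)) => Sn; last first.
    by rewrite big1 // => T _; rewrite /valid (negbTE Sn) andbF.
  rewrite [X in _ <= X]big_mkcond; apply: ler_sum => T _ /=.
  rewrite /valid Sn /=; case: (#|T| == n); rewrite ?andbF ?andbT //.
  by case: [disjoint S & T].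
have cnt : forall (X : R), \sum_(S : {set 'I_N} | #|S| == n) X = X *+ 'C(N, n).
  move=> X; rewrite (eq_bigl (fun S => S \in [set S : {set 'I_N} | #|S| == n])); last by move=> S; rewrite inE.
  by rewrite sumr_const card_draws card_ord.
by rewrite cnt cnt -mulrnA mulr_natl.
Qed.
End Gnp.
Section Ana.
Variable R : realType.

Lemma pow_le (a b : R) n : 0 <= a -> a <= b -> a ^+ n <= b ^+ n.
Proof.
move=> a0 ab; elim: n => [|n IH]; rewrite ?expr0 // !exprS.
by apply: ler_pM => //; exact: exprn_ge0.
Qed.

Lemma ffact_le_exp M k : (M ^_ k <= M ^ k)%N.
Proof.
elim: k => [|k IH]; first by [].
by rewrite ffactnSr expnSr leq_mul // leq_subr.
Qed.

Lemma fact_bound k : (k%:R : R) ^+ k <= expR k%:R * k`!%:R.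
Proof.
case: k => [|j]; first by rewrite expr0 fact0 mulr1 expR0.
have h := @expR_ge1Dxn R j.+1%:R j (ler0n _ _).
have f0 : (0 : R) < j.+1`!%:R by rewrite ltr0n fact_gt0.
rewrite -ler_pdivrMr //.
by apply: le_trans h; rewrite lerDr.
Qed.

Lemma bin_bound M k : ('C(M, k)%:R : R) <= (M%:R) ^+ k / k`!%:R.
Proof.
have f0 : (0 : R) < k`!%:R by rewrite ltr0n fact_gt0.
rewrite ler_pdivlMr // -natrM -natrX ler_nat bin_ffact.
exact: ffact_le_exp.
Qed.

Lemma alg4 (A B C D : R) : A * (B / C) * D = B * ((A * D) / C).
Proof. by ring. Qed.
Lemma alg4' (A B C D : R) : A * B / C * D = B * ((A * D) / C).
Proof. by ring. Qed.

Lemma key_aux (b y nR p : R) : 8 * b * nR ^+ 2 * p * (3 * y / 4) = nR * (6 * (nR * p * (b * y))).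
Proof. by field. Qed.
Lemma split4 (t : R) : t = t / 4 + 3 * t / 4.
Proof. lra. Qed.
Lemma step5_aux (K m c d : R) : m < K -> 0 < c -> m * c = d -> d <= K * c.
Proof. move=> h1 h2 <-; nra. Qed.
Lemma z4 (z : R) : 3 <= z -> 81 <= z ^+ 4.
Proof.
move=> h; have h2 : 9 <= z * z by nra.
have -> : z ^+ 4 = (z * z) * (z * z) by rewrite !exprS expr0 mulr1 !mulrA.
nra.
Qed.
Lemma fin_aux (G bad X c : R) : G = 1 - bad -> 0 <= bad -> bad <= X -> X <= c -> 1 - c <= G <= 1.
Proof. move=> -> *; apply/andP; split; lra. Qed.

Lemma e_le4 : expR 1 <= 4 :> R.
Proof.
have h1 : 1 / 2 <= expR (- (1 / 2)) :> R.
  by have := expR_ge1Dx (- (1/2) : R); lra.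
have h : expR 1 * (expR (- (1 / 2))) ^+ 2 = 1 :> R.
  rewrite -expRM_natl -expRD -[X in _ = X]expR0; congr expR; lra.
have e0 : 0 < expR 1 :> R by exact: expR_gt0.
have h2 : 1 / 4 <= (expR (- (1 / 2))) ^+ 2 :> R.
  rewrite expr2; have := h1; nra.
have : expR 1 * (1/4) <= expR 1 * (expR (- (1 / 2))) ^+ 2 :> R.
  by rewrite ler_pM2l.
lra.
Qed.

Lemma analytic (N n : nat) (p : R) : 0 <= p <= 1 -> (0 < n)%N -> (3 * n <= N)%N ->
  1 < beta_par N n p ->
  ('C(N, n) * 'C(N, n))%:R * ('C(2 * n * n, (Num.truncn (8 * beta_par N n p * n%:R ^+ 2 * p)).+1)%:R
     * p ^+ (Num.truncn (8 * beta_par N n p * n%:R ^+ 2 * p)).+1)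
  <= (expR 1 ^+ 2 / 81) ^+ n.
Proof.
move=> /andP[p0 p1] n0 hN hb.
set b := beta_par N n p in hb *.
set m := 8 * b * n%:R ^+ 2 * p.
set k := (Num.truncn m).+1.
set nR : R := n%:R. set NR : R := N%:R.
have nR0 : 0 < nR by rewrite ltr0n.
set z := NR / nR.
have z3 : 3 <= z.
  rewrite /z ler_pdivlMr // /nR /NR -natrM ler_nat; lia.
have z0 : 0 < z by lra.
set L := ln z.
set a := nR * p.
set x := a^-1 * L.
set y := ln x.
have bdef : b = x / y by [].
have x1 : 1 < x.
  rewrite ltNge; apply/negP => hx.
  have : b <= 0.
    rewrite bdef; case: (ltrP 0 x) => x0.
      by apply: mulr_ge0_le0; [exact: ltW | rewrite invr_le0; exact: ln_le0].
    by rewrite /y ln0 // invr0 mulr0.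
  move=> ?; lra.
have y0 : 0 < y by apply: ln_gt0.
have a0 : 0 < a.
  have a_ge : 0 <= a by rewrite mulr_ge0 // ltW.
  rewrite lt_neqAle a_ge andbT eq_sym; apply/eqP => a00.
  by move: x1; rewrite /x a00 invr0 mul0r ltr10.
have pp : 0 < p.
  rewrite -(pmulr_rgt0 p nR0). exact: a0.
have xe : expR y = x by rewrite /y lnK // posrE; lra.
have La : L = a * x by rewrite /x mulrA mulfV ?mul1r // gt_eqF.
have bye : b * y = x by rewrite bdef divfK // gt_eqF.
have b0 : 0 < b by lra.
have m0 : 0 < m by apply: mulr_gt0 => //; apply: mulr_gt0; [apply: mulr_gt0 => // | exact: exprn_gt0].
have mk : m < k%:R by have := truncn_itv (ltW m0); case/andP.
have e0 : 0 < expR 1 :> R by exact: expR_gt0.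
have hC : 'C(N, n)%:R <= (expR 1 * z) ^+ n.
  apply: le_trans (bin_bound N n) _.
  have f0 : (0 : R) < n`!%:R by rewrite ltr0n fact_gt0.
  have fb := fact_bound n.
  have en : expR nR = expR 1 ^+ n by rewrite -expRM_natl mulr1.
  rewrite ler_pdivrMr //.
  have nn0 : 0 < nR ^+ n by exact: exprn_gt0.
  rewrite exprMn /z expr_div_n.
  rewrite alg4.
  rewrite ler_peMr ?exprn_ge0 ?ler0n // ler_pdivlMr // mul1r -en; exact: fb.
set M := (2 * n * n)%N.
have K0 : (0 : R) < k%:R by rewrite ltr0n.
have kf : (0 : R) < k`!%:R by rewrite ltr0n fact_gt0.
have step1 : 'C(M, k)%:R * p ^+ k <= (M%:R * p) ^+ k / k`!%:R.
  apply: le_trans (ler_wpM2r (exprn_ge0 k p0) (bin_bound M k)) _.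
  by rewrite exprMn mulrAC.
have step2 : (M%:R * p) ^+ k / k`!%:R <= (expR 1 * (M%:R * p) / k%:R) ^+ k.
  have fb := fact_bound k.
  have ek : expR k%:R = expR 1 ^+ k :> R by rewrite -(expRM_natl k (1 : R)) mulr1.
  have kk0 : (0 : R) < k%:R ^+ k by exact: exprn_gt0.
  rewrite ler_pdivrMr // expr_div_n exprMn.
  rewrite -exprMn [(expR 1 * _) ^+ k]exprMn alg4'.
  rewrite ler_peMr ?exprn_ge0 ?mulr_ge0 ?ler0n // ler_pdivlMr // mul1r -ek; exact: fb.
have step3 : expR 1 * (M%:R * p) / k%:R <= expR (- (3 * y / 4)).
  have Mp0 : 0 <= expR 1 * (M%:R * p) by rewrite mulr_ge0 ?mulr_ge0 ?ler0n // ltW.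
  apply: (@le_trans _ _ (expR 1 * (M%:R * p) / m)).
    by apply: ler_wpM2l => //; rewrite lef_pV2 ?posrE // ltW.
  have -> : expR 1 * (M%:R * p) / m = expR 1 / (4 * b).
    rewrite /m /M natrM natrM -/nR; field.
    by apply/and3P; split; rewrite gt_eqF.
  set u := expR (y / 4). set v := expR (3 * y / 4).
  have u0 : 0 < u by exact: expR_gt0.
  have v0 : 0 < v by exact: expR_gt0.
  have xuv : x = u * v by rewrite -xe -expRD; congr expR; exact: split4.
  have hu : expR 1 * (y / 4) <= u.
    have h := expR_ge1Dx (y / 4 - 1).
    have : expR (y / 4 - 1) * expR 1 = u by rewrite -expRD subrK.
    move=> hh; rewrite -hh mulrC ler_pM2r //; by move: h; rewrite addrC subrK.
  rewrite expRN -/v bdef xuv.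
  have -> : expR 1 / (4 * (u * v / y)) = (expR 1 * (y / 4)) / u * v^-1.
    by field; apply/and3P; split; rewrite gt_eqF.
  rewrite -[X in _ <= X]mul1r; apply: ler_wpM2r; first by rewrite invr_ge0 ltW.
  by rewrite ler_pdivrMr // mul1r.
have step4 : (expR 1 * (M%:R * p) / k%:R) ^+ k <= expR (- (3 * y / 4)) ^+ k.
  apply: pow_le _ step3; apply: divr_ge0 (ltW K0).
  exact: mulr_ge0 (ltW e0) (mulr_ge0 (ler0n _ _) (ltW pp)).
have key : m * (3 * y / 4) = nR * (6 * L).
  rewrite La -bye /m /a -/nR; exact: key_aux.
have step5 : expR (- (3 * y / 4)) ^+ k <= expR (- (6 * L)) ^+ n.
  rewrite -!expRM_natl ler_expR -/nR !mulrN lerN2.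
  apply: step5_aux mk _ key.
  by apply: divr_gt0; [apply: mulr_gt0 | ].
have hT2 := le_trans step1 (le_trans step2 (le_trans step4 step5)).
rewrite natrM.
have C0 : (0 : R) <= 'C(N, n)%:R by exact: ler0n.
apply: le_trans (ler_pM _ _ (ler_pM C0 C0 hC hC) hT2) _.
- by rewrite mulr_ge0.
- by rewrite mulr_ge0 ?ler0n ?exprn_ge0.
rewrite -!exprMn; apply: pow_le.
  have ez1 : 0 <= expR 1 * z by exact: mulr_ge0 (expR_ge0 _) (ltW z0).
  apply: mulr_ge0; last exact: expR_ge0.
  exact: (mulr_ge0 ez1 ez1).
have zL : expR L = z by rewrite /L lnK // posrE.
rewrite expRN (expRM_natl 6) zL.
have -> : expR 1 * z * (expR 1 * z) * (z ^+ 6)^-1 = expR 1 ^+ 2 * (z ^+ 4)^-1.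
  by field; rewrite gt_eqF.
apply: ler_wpM2l; first by rewrite exprn_ge0 // ltW.
rewrite lef_pV2 ?posrE ?exprn_gt0 //.
exact: z4.
Qed.
End Ana.

Lemma key (R : realType) (N n : nat) (p : R) : (0 <= p <= 1) -> (0 < n)%N -> (3 * n <= N)%N ->
  1 < beta_par N n p ->
  1 - (expR 1 ^+ 2 / 81) ^+ n <= gnp_prob N p (good_event N n (8 * beta_par N n p * n%:R ^+ 2 * p)) <= 1.
Proof.
move=> hp n0 hN hb.
have m0 : 0 <= 8 * beta_par N n p * n%:R ^+ 2 * p.
  case/andP: hp => p0 _; apply: (mulr_ge0 _ p0); apply: (mulr_ge0 _ (exprn_ge0 _ (ler0n _ _))).
  apply: mulr_ge0; first exact: ler0n.
  exact: ltW (lt_trans ltr01 hb).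
rewrite (@gnp_compl R N p).
have bad0 : 0 <= gnp_prob N p (predC (good_event N n (8 * beta_par N n p * n%:R ^+ 2 * p))).
  by apply: sumr_ge0 => E _; apply: (@w_ge0 R N p hp).
have h1 := @gnp_bad R N p hp n _ m0.
have h2 := @analytic R N n p hp n0 hN hb.
exact: (@fin_aux R _ _ _ _ erefl bad0 h1 h2).
Qed.

Lemma c_lt1 (R : realType) : `|expR 1 ^+ 2 / 81| < 1 :> R.
Proof.
have := e_le4 R; have e0 : 0 < expR 1 :> R by exact: expR_gt0.
move=> h; rewrite ger0_norm; last by apply: divr_ge0 => //; apply: exprn_ge0; lra.
rewrite ltr_pdivrMr //; nra.
Qed.

Theorem lemma2p6 (R : realType) (N : nat -> nat) (p : nat -> R)
  (hp : forall n, 0 <= p n <= 1)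
  (hN : \forall n \near \oo, (3 * n <= N n)%N)
  (hbeta : \forall n \near \oo, 1 < beta_par (N n) n (p n)) :
  (fun n => gnp_prob (N n) (p n)
              (good_event (N n) n (8 * beta_par (N n) n (p n) * n%:R ^+ 2 * p n)))
    @ \oo --> (1 : R).
Proof.
apply: (@squeeze_cvgr _ _ _ _ (fun n => 1 - (expR 1 ^+ 2 / 81) ^+ n) (fun=> 1)).
- near=> n; apply: key => //.
  + near: n; exact: nbhs_infty_gt.
  + by near: n.
  + by near: n.
- rewrite -[X in _ --> X]subr0; apply: cvgB; first exact: cvg_cst.
  exact: cvg_expr (c_lt1 R).
- exact: cvg_cst.
Unshelve. all: by end_near.
Qed.
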